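(* Let $P$ be a well-ordered phaser and suppose $P\to Q$. Then $Q$ is well-ordered.
   Context: A view is a record $v=(\mathrm{sp}(v),\mathrm{wp}(v),\mathrm{mode}(v))$ with $\mathrm{sp}(v),\mathrm{wp}(v)\in\mathbb{N}$ and $\mathrm{mode}(v)\in\{\mathtt{SW},\mathtt{SO},\mathtt{WO}\}$. For a view or mode, $\mathrm{CanSignal}$ means the mode is $\mathtt{SW}$ or $\mathtt{SO}$, and $\mathrm{CanWait}$ means the mode is $\mathtt{SW}$ or $\mathtt{WO}$. A phaser (state) $P$ is a finite partial map from task identifiers to views; $t\in P$ means $t\in\mathrm{dom}\,P$. For views, $v_1\unrhd v_2$ (cannot-happen-before) iff $\mathrm{mode}(v_1)=\mathtt{WO}$ or $\mathrm{sp}(v_1)\ge\mathrm{wp}(v_2)$ or $\mathrm{mode}(v_2)=\mathtt{SO}$. For phasers, $P\unrhd Q$ iff $P(t)\unrhd Q(t')$ for all $t\in\mathrm{dom}\,P$, $t'\in\mathrm{dom}\,Q$. $P$ is well-ordered iff $P\unrhd P$. Reduction $P\to_t^{o}Q$ (task $t$ performs operation $o$) is defined by four rules. Signal: if $P(t)=v$, $\mathrm{CanSignal}(v)$, and ($\mathrm{mode}(v)=\mathtt{SW}\Rightarrow\mathrm{wp}(v)=\mathrm{sp}(v)$), then $Q=P[t\mapsto v']$ where $v'$ is $v$ with $\mathrm{sp}$ increased by 1. Wait: if $P(t)=v$, $\mathrm{CanWait}(v)$, ($\mathrm{mode}(v)=\mathtt{SW}\Rightarrow\mathrm{wp}(v)+1=\mathrm{sp}(v)$),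 and $\mathrm{Sync}(P,t)$, meaning that for every $t'\in\mathrm{dom}\,P$ with $\mathrm{CanSignal}(P(t'))$ we have $\mathrm{sp}(P(t'))>\mathrm{wp}(v)$, then $Q=P[t\mapsto v']$ where $v'$ is $v$ with $\mathrm{wp}$ increased by 1. Register$(t',r)$ with $r$ a mode: if $t'\notin\mathrm{dom}\,P$, $P(t)=v$, ($\mathrm{CanWait}(r)\Rightarrow\mathrm{CanWait}(v)$) and ($\mathrm{CanSignal}(r)\Rightarrow\mathrm{CanSignal}(v)$), then $Q=P[t'\mapsto(\mathrm{sp}(v),\mathrm{wp}(v),r)]$. Drop: if $t\in\mathrm{dom}\,P$, then $Q$ is $P$ with $t$ removed from its domain. $P\to Q$ means $P\to_t^{o}Q$ for some $t,o$. *)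

(* Defs.v *)
From Stdlib Require Import Arith List.

Inductive pmode := SW | SO | WO.

Record view := mkView { sp : nat; wp : nat; mode : pmode }.

Definition CanSignal (m : pmode) : Prop := m = SW \/ m = SO.
Definition CanWait (m : pmode) : Prop := m = SW \/ m = WO.

Definition tid := nat.

Record phaser := mkPhaser {
  pmap :> tid -> option view;
  pfinite : exists l : list tid, forall t v, pmap t = Some v -> In t l }.

Definition vchb (v1 v2 : view) : Prop :=
  mode v1 = WO \/ sp v1 >= wp v2 \/ mode v2 = SO.

Definition pchb (P Q : phaser) : Prop :=
  forall t t' v v', P t = Some v -> Q t' = Some v' -> vchb v v'.

Definition well_ordered (P : phaser) : Prop := pchb P P.

Definition Sync (P : phaser) (t : tid) : Prop :=
  forall t' v v', P t = Some v -> P t' = Some v' -> CanSignal (mode v') ->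
    sp v' > wp v.

Inductive op := Signal | Wait | Register (t' : tid) (r : pmode) | Drop.

Definition updated (P Q : phaser) (t : tid) (o : option view) : Prop :=
  Q t = o /\ forall u, u <> t -> Q u = P u.

Inductive reduces (P : phaser) (t : tid) : op -> phaser -> Prop :=
| red_signal : forall v Q,
    P t = Some v -> CanSignal (mode v) ->
    (mode v = SW -> wp v = sp v) ->
    updated P Q t (Some (mkView (S (sp v)) (wp v) (mode v))) ->
    reduces P t Signal Q
| red_wait : forall v Q,
    P t = Some v -> CanWait (mode v) ->
    (mode v = SW -> wp v + 1 = sp v) ->
    Sync P t ->
    updated P Q t (Some (mkView (sp v) (S (wp v)) (mode v))) ->
    reduces P t Wait Q
| red_register : forall t' r v Q,
    P t' = None -> P t = Some v ->
    (CanWait r -> CanWait (mode v)) ->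
    (CanSignal r -> CanSignal (mode v)) ->
    updated P Q t' (Some (mkView (sp v) (wp v) r)) ->
    reduces P t (Register t' r) Q
| red_drop : forall v Q,
    P t = Some v ->
    updated P Q t None ->
    reduces P t Drop Q.

Definition step (P Q : phaser) : Prop := exists t o, reduces P t o Q.

(* Main.v *)
Require Import Defs.
From Stdlib Require Import Arith Lia.

Ltac fin := unfold vchb, CanSignal, CanWait in *; simpl in *;
  repeat match goal with
  | m : pmode |- _ => destruct m
  end; intuition (try discriminate; try lia).

Theorem lemma2 (P Q : phaser) :
  well_ordered P -> step P Q -> well_ordered Q.
Proof.
  intros HP [t [o Hr]].
  unfold well_ordered, pchb in *.
  destruct Hr as [v Q' Hv Hs Hsw [HQt HQu]
                 |v Q' Hv Hs Hsw Hsync [HQt HQu]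
                 |t' r v Q' Ht' Hv Hw Hs [HQt HQu]
                 |v Q' Hv [HQt HQu]];
  intros t1 t2 w1 w2 H1 H2.
  - destruct v as [a b m]; simpl in *.
    destruct (Nat.eq_dec t1 t) as [->|n1]; destruct (Nat.eq_dec t2 t) as [->|n2].
    + rewrite HQt in H1, H2; inversion H1; inversion H2; subst.
      pose proof (HP _ _ _ _ Hv Hv); fin.
    + rewrite HQt in H1; rewrite HQu in H2 by auto; inversion H1; subst.
      pose proof (HP _ _ _ _ Hv H2); destruct w2; fin.
    + rewrite HQt in H2; rewrite HQu in H1 by auto; inversion H2; subst.
      pose proof (HP _ _ _ _ H1 Hv); destruct w1; fin.
    + rewrite HQu in H1, H2 by auto. eauto.
  - destruct v as [a b m]; simpl in *.
    destruct (Nat.eq_dec t1 t) as [->|n1]; destruct (Nat.eq_dec t2 t) as [->|n2].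
    + rewrite HQt in H1, H2; inversion H1; inversion H2; subst.
      pose proof (HP _ _ _ _ Hv Hv); fin.
    + rewrite HQt in H1; rewrite HQu in H2 by auto; inversion H1; subst.
      pose proof (HP _ _ _ _ Hv H2); destruct w2; fin.
    + rewrite HQt in H2; rewrite HQu in H1 by auto; inversion H2; subst.
      pose proof (HP _ _ _ _ H1 Hv).
      pose proof (Hsync _ _ _ Hv H1) as Hs1.
      destruct w1 as [c d m1]; simpl in *.
      unfold vchb, CanSignal, CanWait in *; simpl in *.
      destruct m1; destruct m; intuition (try discriminate; try lia).
    + rewrite HQu in H1, H2 by auto. eauto.
  - destruct v as [a b m]; simpl in *.
    destruct (Nat.eq_dec t1 t') as [->|n1]; destruct (Nat.eq_dec t2 t') as [->|n2].
    + rewrite HQt in H1, H2; inversion H1; inversion H2; subst.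
      pose proof (HP _ _ _ _ Hv Hv); fin.
    + rewrite HQt in H1; rewrite HQu in H2 by auto; inversion H1; subst.
      pose proof (HP _ _ _ _ Hv H2); destruct w2; fin.
    + rewrite HQt in H2; rewrite HQu in H1 by auto; inversion H2; subst.
      pose proof (HP _ _ _ _ H1 Hv); destruct w1; fin.
    + rewrite HQu in H1, H2 by auto. eauto.
  - destruct (Nat.eq_dec t1 t) as [->|n1]; [congruence|].
    destruct (Nat.eq_dec t2 t) as [->|n2]; [congruence|].
    rewrite HQu in H1, H2 by auto. eauto.
Qed.
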